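(* Let $C$ be the ideal of the Kauffman monoid $\mathcal{K}_3$ generated by $c$. Then $\mathcal{K}_3\setminus C=\{1,h_1,h_2,h_1h_2,h_2h_1\}$. Moreover, the Rees quotient $\mathcal{K}_3/C$ is isomorphic to the 6-element Brandt monoid $B_2^1$ via $h_1\mapsto a$, $h_2\mapsto b$. The involution induced on $\mathcal{K}_3/C$ by the reflection swaps $ab$ and $ba$ and fixes all other elements; consequently $\{ab,ba,0\}$ is an involution subsemigroup isomorphic to the twisted semilattice $TSL$. Finally, each Zimin word is an involutory isoterm relative to $\mathcal{K}_3$ regarded as an involution semigroup under reflection.
   Context: $\mathcal{K}_3$ is the monoid presented by generators $c,h_1,h_2$ and relations $h_1h_2h_1=h_1$, $h_2h_1h_2=h_2$, and $h_i^2=ch_i=h_ic$ for $i=1,2$. The reflection ${}^*$ is the unique involutory anti-automorphism of $\mathcal{K}_3$ fixing $c,h_1,h_2$. The Brandt monoid $B_2^1$ is the monoid with zero $\{1,a,b,ab,ba,0\}$ defined by $a^2=b^2=0$, $aba=a$, $bab=b$. The twisted semilattice $TSL$ is the involution semigroup $\{e,f,0\}$ with $e^2=e$, $f^2=f$, all other products equal to $0$, and $e^\star=f$, $f^\star=e$, $0^\star=0$. Zimin words are defined by $Z_1=x_1$ and $Z_{n+1}=Z_nx_{n+1}Z_n$. A word $v$ is an involutory isoterm relative to an involution semigroup $\mathcal{S}$ if the only involutory word $v'$ (an element of the free semigroup on $X\cup\{x^\star\mid x\in X\}$, with $(x_1\cdots x_m)^\star=x_m^\star\cdots x_1^\star$)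 such that $\mathcal{S}$ satisfies $v\approx v'$ is $v'=v$. *)

(* Defs.v *)
From mathcomp Require Import all_boot.
Set Implicit Arguments. Unset Strict Implicit. Unset Printing Implicit Defensive.

Inductive letter := Lc | Lh1 | Lh2.

Inductive krel : seq letter -> seq letter -> Prop :=
| kr_h1h2h1 : krel [:: Lh1; Lh2; Lh1] [:: Lh1]
| kr_h2h1h2 : krel [:: Lh2; Lh1; Lh2] [:: Lh2]
| kr_sq1 : krel [:: Lh1; Lh1] [:: Lc; Lh1]
| kr_sq2 : krel [:: Lh2; Lh2] [:: Lc; Lh2]
| kr_comm1 : krel [:: Lc; Lh1] [:: Lh1; Lc]
| kr_comm2 : krel [:: Lc; Lh2] [:: Lh2; Lc].

(** The monoid congruence on the free monoid generated by krel;
    K_3 is the quotient of seq letter by kequiv. *)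
Inductive kequiv : seq letter -> seq letter -> Prop :=
| keq_refl u : kequiv u u
| keq_sym u v : kequiv u v -> kequiv v u
| keq_trans u v w : kequiv u v -> kequiv v w -> kequiv u w
| keq_step p l r q : krel l r -> kequiv (p ++ l ++ q) (p ++ r ++ q).

Definition inC (u : seq letter) : Prop :=
  exists p q, kequiv u (p ++ Lc :: q).

(** The reflection on words: all generators are fixed, so it is reversal. *)
Definition refl_word (u : seq letter) : seq letter := rev u.

Inductive B21 := B1 | Ba | Bb | Bab | Bba | B0.

Definition bmul (x y : B21) : B21 :=
  match x, y with
  | B1, y => y
  | x, B1 => x
  | Ba, Bb => Bab
  | Ba, Bba => Ba
  | Bb, Ba => Bba
  | Bb, Bab => Bb
  | Bab, Ba => Ba
  | Bab, Bab => Bab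
  | Bba, Bb => Bb
  | Bba, Bba => Bba
  | _, _ => B0
  end.

Definition binv (x : B21) : B21 :=
  match x with Bab => Bba | Bba => Bab | x => x end.

Definition phiL (l : letter) : B21 :=
  match l with Lc => B0 | Lh1 => Ba | Lh2 => Bb end.
Definition phi (u : seq letter) : B21 := foldr (fun l acc => bmul (phiL l) acc) B1 u.

Inductive TSL := Te | Tf | T0.
Definition tmul (x y : TSL) : TSL :=
  match x, y with Te, Te => Te | Tf, Tf => Tf | _, _ => T0 end.
Definition tinv (x : TSL) : TSL :=
  match x with Te => Tf | Tf => Te | T0 => T0 end.

(** An involutory word: letters (i, false) = x_i and (i, true) = x_i^*. *)
Definition iword := seq (nat * bool).

Definition ieval (sigma : nat -> seq letter) (w : iword) : seq letter :=
  flatten (map (fun p => if p.2 then refl_word (sigma p.1) else sigma p.1) w).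

Definition K3_satisfies (v v' : iword) : Prop :=
  forall sigma : nat -> seq letter, kequiv (ieval sigma v) (ieval sigma v').

(** zimin k = Z_(k+1): Z_1 = x_1, Z_(n+1) = Z_n x_(n+1) Z_n. *)
Fixpoint zimin (k : nat) : iword :=
  match k with
  | 0 => [:: (1, false)]
  | k'.+1 => zimin k' ++ (k'.+2, false) :: zimin k'
  end.

Definition K3_inv_isoterm (v : iword) : Prop :=
  forall v' : iword, v' <> [::] -> K3_satisfies v v' -> v' = v.

(* Main.v *)
Require Import Defs.
From mathcomp Require Import all_boot zify.
Set Implicit Arguments. Unset Strict Implicit. Unset Printing Implicit Defensive.
Set Implicit Arguments. Unset Strict Implicit. Unset Printing Implicit Defensive.
Lemma bmulA x y z : bmul x (bmul y z) = bmul (bmul x y) z.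
Proof. by case: x; case: y; case: z. Qed.
Lemma bmul1r x : bmul x B1 = x. Proof. by case: x. Qed.

Lemma phi_cat u v : phi (u ++ v) = bmul (phi u) (phi v).
Proof. elim: u => [|l u IH] //=. by rewrite IH bmulA. Qed.

Lemma kequiv_cong a b u v : kequiv u v -> kequiv (a ++ u ++ b) (a ++ v ++ b).
Proof.
elim=> [w|w1 w2 _ IH|w1 w2 w3 _ IH1 _ IH2|p l r q H].
- exact: keq_refl.
- exact: keq_sym.
- exact: keq_trans IH1 IH2.
- rewrite -!catA; move: (keq_step (a ++ p) (q ++ b) H); by rewrite -!catA.
Qed.

Lemma krel_phi l r : krel l r -> phi l = phi r. Proof. by case. Qed.
Lemma kequiv_phi u v : kequiv u v -> phi u = phi v.
Proof.
elim=> [w|w1 w2 _ IH|w1 w2 w3 _ IH1 _ IH2|p l r q H].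
- by [].
- by rewrite IH.
- by rewrite IH1 IH2.
- by rewrite !phi_cat (krel_phi H).
Qed.

Definition five u := kequiv u [::] \/ kequiv u [:: Lh1] \/ kequiv u [:: Lh2] \/
       kequiv u [:: Lh1; Lh2] \/ kequiv u [:: Lh2; Lh1].

Lemma cons_cong l u v : kequiv u v -> kequiv (l :: u) (l :: v).
Proof. move=> H; have := kequiv_cong [:: l] [::] H; by rewrite !cats0. Qed.

Lemma inC_cons l u : inC u -> inC (l :: u).
Proof. case=> p [q H]; exists (l :: p), q; exact: cons_cong. Qed.

Lemma dich u : inC u \/ five u.
Proof.
elim: u => [|l u [Hc|H5]]; first by right; left; exact: keq_refl.
- by left; apply: inC_cons.
- case: l.
  + by left; exists [::], u; exact: keq_refl.
  + case: H5 => [H|[H|[H|[H|H]]]]; have H' := cons_cong Lh1 H.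
    * by right; right; left.
    * left; exists [::], [:: Lh1]; exact: keq_trans H' (keq_step [::] [::] kr_sq1).
    * by right; right; right; right; left.
    * left; exists [::], [:: Lh1; Lh2]; exact: keq_trans H' (keq_step [::] [:: Lh2] kr_sq1).
    * right; right; left; exact: keq_trans H' (keq_step [::] [::] kr_h1h2h1).
  + case: H5 => [H|[H|[H|[H|H]]]]; have H' := cons_cong Lh2 H.
    * by right; right; right; left.
    * by right; right; right; right; right.
    * left; exists [::], [:: Lh2]; exact: keq_trans H' (keq_step [::] [::] kr_sq2).
    * right; right; right; left; exact: keq_trans H' (keq_step [::] [::] kr_h2h1h2).
    * left; exists [::], [:: Lh2; Lh1]; exact: keq_trans H' (keq_step [::] [:: Lh1] kr_sq2).
Qed.

Lemma inC_phi u : inC u -> phi u = B0.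
Proof.
case=> p [q H]; rewrite (kequiv_phi H) phi_cat /=; by case: (phi p); case: (phi q).
Qed.

Lemma five_phi u : five u -> phi u <> B0.
Proof. by case=> [H|[H|[H|[H|H]]]]; rewrite (kequiv_phi H). Qed.

Lemma five_eq u v : five u -> five v -> phi u = phi v -> kequiv u v.
Proof.
case=> [H1|[H1|[H1|[H1|H1]]]]; case=> [H2|[H2|[H2|[H2|H2]]]];
rewrite (kequiv_phi H1) (kequiv_phi H2) => /= E; try discriminate;
exact: keq_trans H1 (keq_sym H2).
Qed.

Lemma krel_rev l r : krel l r -> kequiv (rev l) (rev r).
Proof.
case.
- exact: (keq_step [::] [::] kr_h1h2h1).
- exact: (keq_step [::] [::] kr_h2h1h2).
- exact: keq_trans (keq_step [::] [::] kr_sq1) (keq_step [::] [::] kr_comm1).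
- exact: keq_trans (keq_step [::] [::] kr_sq2) (keq_step [::] [::] kr_comm2).
- exact: keq_sym (keq_step [::] [::] kr_comm1).
- exact: keq_sym (keq_step [::] [::] kr_comm2).
Qed.

Lemma refl_kequiv u v : kequiv u v -> kequiv (refl_word u) (refl_word v).
Proof.
rewrite /refl_word; elim=> [w|w1 w2 _ IH|w1 w2 w3 _ IH1 _ IH2|p l r q H].
- exact: keq_refl.
- exact: keq_sym.
- exact: keq_trans IH1 IH2.
- rewrite !rev_cat -!catA; exact: kequiv_cong (krel_rev H).
Qed.

Lemma binvM x y : binv (bmul x y) = bmul (binv y) (binv x).
Proof. by case: x; case: y. Qed.

Lemma phi_rev u : phi (rev u) = binv (phi u).
Proof.
elim: u => [|l u IH] //=.
rewrite rev_cons -cats1 phi_cat IH binvM /= bmul1r; by case: l.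
Qed.

Definition wit (z : B21) : seq letter :=
  match z with B1 => [::] | Ba => [:: Lh1] | Bb => [:: Lh2] | Bab => [:: Lh1; Lh2]
  | Bba => [:: Lh2; Lh1] | B0 => [:: Lc] end.
Lemma phi_wit z : phi (wit z) = z. Proof. by case: z. Qed.
Definition bval (tau : nat -> B21) (p : nat * bool) := if p.2 then binv (tau p.1) else tau p.1.
Definition ev tau (w : iword) := foldr (fun p acc => bmul (bval tau p) acc) B1 w.
Definition Bsat (v v' : iword) := forall tau, ev tau v = ev tau v'.

Lemma phi_ieval sigma w : phi (ieval sigma w) = ev (fun i => phi (sigma i)) w.
Proof.
elim: w => [|[i b] w IH] //=. rewrite phi_cat IH /bval /refl_word /=.
by case: b => //; rewrite phi_rev.
Qed.

Lemma ev_ext tau tau' w : (forall i, tau i = tau' i) -> ev tau w = ev tau' w.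
Proof. move=> E; elim: w => [|[i b] w IH] //=; by rewrite IH /bval /= E. Qed.

Lemma K3_Bsat v v' : K3_satisfies v v' -> Bsat v v'.
Proof.
move=> H tau; have := kequiv_phi (H (fun i => wit (tau i))).
rewrite !phi_ieval (ev_ext _ (fun i => phi_wit (tau i))).
by rewrite (ev_ext _ (fun i => phi_wit (tau i))).
Qed.

Definition del j (w : iword) := filter (fun p => p.1 != j) w.

Lemma ev_del tau j w : tau j = B1 -> ev tau w = ev tau (del j w).
Proof.
move=> Hj; elim: w => [|[i b] w IH] //=.
case: eqP => [->|_] /=; last by rewrite IH.
by rewrite /bval /= Hj; case: b; rewrite /= IH.
Qed.

Lemma ev_upd tau j z w : all (fun p => p.1 != j) w ->
  ev (fun i => if i == j then z else tau i) w = ev tau w.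
Proof.
elim: w => [|[i b] w IH] //= /andP [Hi Hw].
by rewrite IH // /bval /= (negbTE Hi).
Qed.

Lemma all_del j w : all (fun p => p.1 != j) (del j w).
Proof. exact: filter_all. Qed.

Fixpoint intl (x : nat * bool) (w : iword) : iword :=
  match w with [::] => [:: x] | y :: d => x :: y :: intl x d end.

Lemma del_intl j W : all (fun p => p.1 != j) W -> del j (intl (j, false) W) = W.
Proof.
elim: W => [|[i b] W IH] /=; first by rewrite eqxx.
by move=> /andP [Hi HW]; rewrite eqxx /= Hi IH.
Qed.

Definition tau0 (j : nat) := fun i : nat => if i == j then Ba else Bb.
Definition tau1 (j : nat) := fun i : nat => if i == j then Bab else B1.

Lemma ev_intl0 j W : all (fun p => p.1 != j) W -> ev (tau0 j) (intl (j, false) W) = Ba.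
Proof.
elim: W => [|[i b] W IH] /=; first by rewrite /bval /tau0 /= eqxx.
move=> /andP [Hi HW]; rewrite IH // /bval /tau0 /= eqxx (negbTE Hi).
by case: b.
Qed.

Lemma ev_intl1 j W : all (fun p => p.1 != j) W -> ev (tau1 j) (intl (j, false) W) = Bab.
Proof.
elim: W => [|[i b] W IH] /=; first by rewrite /bval /tau1 /= eqxx.
move=> /andP [Hi HW]; rewrite IH // /bval /tau1 /= eqxx (negbTE Hi).
by case: b.
Qed.

Lemma stars j w : ev (tau1 j) w = B1 \/ ev (tau1 j) w = Bab ->
  all (fun p => (p.1 == j) ==> ~~ p.2) w.
Proof.
elim: w => [|[i b] w IH] //=.
rewrite /bval /tau1 /=.
case: (i == j); case: b => /=; case E: (ev _ w) => //; try by case.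
all: move=> _; apply: IH; auto.
Qed.

Lemma ev_nil_B1 tau w : (forall i, tau i <> B1) -> ev tau w = B1 -> w = [::].
Proof.
case: w => [|[i b] w] //= H. rewrite /bval /=.
by case: b; move: (H i); case: (tau i) => //; case: (ev tau w).
Qed.

Lemma alt j w : all (fun p => (p.1 == j) ==> ~~ p.2) w -> ev (tau0 j) w = Ba ->
  w = intl (j, false) (del j w).
Proof.
move: {2}(size w) (leqnn (size w)) => n.
elim: n w => [|n IH] [|[i b] w] //= Hs /andP [Hb Hw].
rewrite /bval /tau0 /=.
case: eqP Hb => [Eij|Nij] /= Hb.
- subst i; move: Hb; case: b => //= _.
  case E: (ev (tau0 j) w) => // _.
  + by rewrite (ev_nil_B1 _ E) //= => i; rewrite /tau0; case: (i == j).
  + move: E Hs Hw; case: w => [|[i2 b2] w] //=.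
    rewrite /bval /tau0 /=.
    case: eqP => [_|Nij2] /=; first by case: b2; case: (ev _ w).
    move=> E Hs Hw.
    have E2 : ev (tau0 j) w = Ba by move: E; case: b2; case: (ev _ w).
    rewrite -(IH w) //. exact: ltnW Hs.
- by case: b; case: (ev _ w).
Qed.

Lemma step j W v' : all (fun p => p.1 != j) W ->
  (forall w'', Bsat W w'' -> w'' = W) -> Bsat (intl (j, false) W) v' ->
  v' = intl (j, false) W.
Proof.
move=> HW IH H.
have Hd : del j v' = W.
  apply: IH => tau.
  pose tau' := fun i : nat => if i == j then B1 else tau i.
  have Hj : tau' j = B1 by rewrite /tau' eqxx.
  rewrite -(ev_upd tau B1 HW) -/tau' -{1}(del_intl HW) -ev_del // H.
  by rewrite (ev_del _ Hj) ev_upd // all_del.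
have H1 := H (tau1 j); rewrite ev_intl1 // in H1.
have H0 := H (tau0 j); rewrite ev_intl0 // in H0.
rewrite (alt (stars (or_intror (esym H1))) (esym H0)); by rewrite Hd.
Qed.

Definition shift s (w : iword) : iword := map (fun p => (p.1 + s, p.2)) w.
Definition Zs k s := shift s (zimin k).

Lemma intl_cat x A y B : intl x (A ++ y :: B) = intl x A ++ y :: intl x B.
Proof. by elim: A => [|a A IH] //=; rewrite IH. Qed.

Lemma Zs_succ k s : Zs k.+1 s = intl (s.+1, false) (Zs k s.+1).
Proof.
elim: k s => [|k IH] s; first by [].
rewrite /Zs [zimin k.+2]/= /shift map_cat /= -!/(shift _ _) -/(Zs k.+1 s) IH.
rewrite /shift map_cat /= -!/(shift _ _) -/(Zs k s.+1) intl_cat.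
by rewrite addnS addSn.
Qed.

Lemma zimin_pos k : all (fun p => 0 < p.1) (zimin k).
Proof. elim: k => [|k IH] //=; by rewrite all_cat /= IH. Qed.

Lemma Zs_all k s : all (fun p => p.1 != s.+1) (Zs k s.+1).
Proof.
rewrite /Zs /shift all_map; apply: sub_all (zimin_pos k) => -[i b] /= Hi.
by rewrite addnS eqSS -{2}(add0n s) eqn_add2r -lt0n.
Qed.

Lemma mainZ k s v' : Bsat (Zs k s) v' -> v' = Zs k s.
Proof.
elim: k s v' => [|k IH] s v'.
- change (Zs 0 s) with (intl (s.+1, false) [::]).
  apply: step => // w'' H.
  case: w'' H => [|p w] // H; move: (H (fun _ => B0)) => /=.
  by rewrite /bval; case: p.2; case: (ev _ w).
- rewrite Zs_succ; apply: step; first exact: Zs_all.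
  exact: IH.
Qed.

Lemma shift0 w : shift 0 w = w.
Proof. elim: w => [|[i b] w IH] //=; by rewrite addn0 IH. Qed.

Theorem mainTheorem8 :
  (* K_3 \ C = {1, h1, h2, h1h2, h2h1} *)
  (forall u : seq letter,
      ~ inC u <->
      (kequiv u [::] \/ kequiv u [:: Lh1] \/ kequiv u [:: Lh2] \/
       kequiv u [:: Lh1; Lh2] \/ kequiv u [:: Lh2; Lh1])) /\
  (* K_3 / C is isomorphic to B_2^1 via h1 |-> a, h2 |-> b (C |-> 0) *)
  (forall u v, phi (u ++ v) = bmul (phi u) (phi v)) /\
  (forall u, phi u = B0 <-> inC u) /\
  (forall u v, phi u = phi v <-> (kequiv u v \/ (inC u /\ inC v))) /\
  (forall z : B21, exists u, phi u = z) /\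
  (* the reflection is well defined on K_3, and induces on K_3/C = B_2^1
     the involution swapping ab and ba and fixing all other elements *)
  (forall u v, kequiv u v -> kequiv (refl_word u) (refl_word v)) /\
  (forall u, phi (refl_word u) = binv (phi u)) /\
  (* {ab, ba, 0} is an involution subsemigroup isomorphic to TSL *)
  (exists psi : TSL -> B21,
      injective psi /\
      (forall x y, psi (tmul x y) = bmul (psi x) (psi y)) /\
      (forall x, psi (tinv x) = binv (psi x)) /\
      (forall z, (z = Bab \/ z = Bba \/ z = B0) <-> exists x, psi x = z)) /\
  (* every Zimin word is an involutory isoterm relative to K_3 *)
  (forall k : nat, K3_inv_isoterm (zimin k)).
Proof.
split.
  move=> u; split.
  - by move=> Hn; case: (dich u).
  - move=> H5 Hc; exact: five_phi H5 (inC_phi Hc).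
split; first exact: phi_cat.
split.
  move=> u; split; last exact: inC_phi.
  by move=> E; case: (dich u) => // H5; case: (five_phi H5 E).
split.
  move=> u v; split.
  - move=> E; case: (dich u) => [Cu|Fu].
      right; split => //; case: (dich v) => // Fv.
      by case: (five_phi Fv); rewrite -E inC_phi.
    case: (dich v) => [Cv|Fv].
      by case: (five_phi Fu); rewrite E inC_phi.
    by left; apply: five_eq.
  - case=> [H|[Cu Cv]]; first exact: kequiv_phi.
    by rewrite !inC_phi.
split; first by move=> z; exists (wit z); exact: phi_wit.
split; first exact: refl_kequiv.
split; first exact: phi_rev.
split.
  exists (fun x => match x with Te => Bab | Tf => Bba | T0 => B0 end).
  split; first by case; case.
  split; first by case; case.
  split; first by case.
  move=> z; split.
  - by case=> [->|[->|->]]; [exists Te|exists Tf|exists T0].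
  - by case=> -[] <-; auto.
move=> k v' _ H.
have := @mainZ k 0 v'; rewrite /Zs shift0; apply; exact: K3_Bsat.
Qed.
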